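(* Let $A$ and $B$ be NFAs with at most $m$ and at most $n$ states, respectively, such that there is no infinite tower of prefixes between $L(A)$ and $L(B)$. Then every tower of prefixes between $L(A)$ and $L(B)$ has height at most $2^{m+n-1}$. Moreover, for infinitely many pairs $(m,n)$ there exist NFAs with $m$ and $n$ states, with no infinite tower of prefixes between their languages, admitting a tower of prefixes of height at least $2^{m+n-2}$.
   Context: A string $v$ is a prefix of $w$, written $v\le w$, if $w=vu$ for some string $u$. A sequence $(w_i)_{i=1}^r$ of strings is a tower of prefixes between languages $K$ and $L$ if $w_1\in K\cup L$ and for all $i=1,\dots,r-1$: $w_i\le w_{i+1}$, $w_i\in K$ implies $w_{i+1}\in L$, and $w_i\in L$ implies $w_{i+1}\in K$; $r$ is its height. An infinite tower of prefixes is an infinite sequence with the same properties. *)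

(* Defs.v *)
From mathcomp Require Import all_boot.
Set Implicit Arguments. Unset Strict Implicit. Unset Printing Implicit Defensive.

Record nfa (Sigma : finType) := NFA {
  nfa_state : finType;
  nfa_init  : {set nfa_state};
  nfa_final : {set nfa_state};
  nfa_trans : nfa_state -> Sigma -> {set nfa_state}
}.

Definition nfa_size (Sigma : finType) (A : nfa Sigma) : nat := #|nfa_state A|.

Definition nfa_step (Sigma : finType) (A : nfa Sigma)
  (S : {set nfa_state A}) (a : Sigma) : {set nfa_state A} :=
  \bigcup_(q in S) nfa_trans q a.

Definition nfa_reach (Sigma : finType) (A : nfa Sigma) (w : seq Sigma)
  : {set nfa_state A} := foldl (@nfa_step Sigma A) (nfa_init A) w.

Definition nfa_lang (Sigma : finType) (A : nfa Sigma) (w : seq Sigma) : Prop :=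
  [exists q in nfa_reach A w, q \in nfa_final A].

(* (w_1, ..., w_r) = (w 0, ..., w (r-1)) is a tower of prefixes between K and L
   of height r (r >= 1). *)
Definition tower (T : eqType) (K L : seq T -> Prop) (w : nat -> seq T) (r : nat)
  : Prop :=
  0 < r /\ (K (w 0) \/ L (w 0)) /\
  forall i, i.+1 < r ->
    [/\ prefix (w i) (w i.+1),
        K (w i) -> L (w i.+1) &
        L (w i) -> K (w i.+1)].

Definition inf_tower (T : eqType) (K L : seq T -> Prop) (w : nat -> seq T) : Prop :=
  (K (w 0) \/ L (w 0)) /\
  forall i,
    [/\ prefix (w i) (w i.+1),
        K (w i) -> L (w i.+1) &
        L (w i) -> K (w i.+1)].

(* Main.v *)
Require Import Defs.
From mathcomp Require Import all_boot zify.
Set Implicit Arguments. Unset Strict Implicit. Unset Printing Implicit Defensive.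

Fixpoint pw (T : Type) (u : seq T) (t : nat) : seq T :=
  if t is t'.+1 then pw u t' ++ u else [::].

Section Gen.
Variable Sigma : finType.

Lemma reach_cat (X : nfa Sigma) x y :
  nfa_reach X (x ++ y) = foldl (@nfa_step Sigma X) (nfa_reach X x) y.
Proof. by rewrite /nfa_reach foldl_cat. Qed.

Lemma lang_reach (X : nfa Sigma) x y :
  nfa_reach X x = nfa_reach X y -> (nfa_lang X x <-> nfa_lang X y).
Proof. by rewrite /nfa_lang => ->. Qed.

Variables (A B : nfa Sigma).
Hypothesis noinf : ~ (exists w, inf_tower (nfa_lang A) (nfa_lang B) w).
Variables (w : nat -> seq Sigma) (r : nat).
Hypothesis tw : tower (nfa_lang A) (nfa_lang B) w r.

Lemma disjKL x : nfa_lang A x -> nfa_lang B x -> False.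
Proof.
move=> hK hL; apply: noinf; exists (fun _ => x); split; first by left.
by move=> i; split=> //; exact: prefix_refl.
Qed.

Lemma tw_mem i : i < r -> nfa_lang A (w i) \/ nfa_lang B (w i).
Proof.
case: tw => _ [h0 hs]; elim: i => // i IH hi.
have [_ hK hL] := hs i hi.
by case: (IH (ltnW hi)) => h; [right; exact: hK | left; exact: hL].
Qed.

Lemma tw_pref a b : a <= b -> b < r -> prefix (w a) (w b).
Proof.
case: tw => _ [_ hs]; elim: b => [|b IH].
  by rewrite leqn0 => /eqP -> _; exact: prefix_refl.
rewrite leq_eqVlt => /orP [/eqP -> _ | hab hb]; first exact: prefix_refl.
apply: prefix_trans (IH hab (ltnW hb)) _; by case: (hs b hb).
Qed.

Section Pump.
Variables i j : nat.
Hypotheses (hij : i < j) (hjr : j < r).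
Hypothesis eqA : nfa_reach A (w i) = nfa_reach A (w j).
Hypothesis eqB : nfa_reach B (w i) = nfa_reach B (w j).

Let p := j - i.
Let v s := drop (size (w i)) (w (i + s)).
Let u := v p.

Lemma ip : i + p = j. Proof. rewrite /p; lia. Qed.

Lemma wv s : s <= p -> w (i + s) = w i ++ v s.
Proof.
move=> hs; have := tw_pref (leq_addr s i); rewrite /p in hs.
have hr : i + s < r by lia.
move=> /(_ hr); rewrite prefixE => /eqP h.
by rewrite /v -{1}(cat_take_drop (size (w i)) (w (i + s))) h.
Qed.

Lemma vpref s : s < p -> prefix (v s) (v s.+1).
Proof.
move=> hs; have hr : (i + s).+1 < r by rewrite /p in hs; lia.
have := tw_pref (leqnSn (i + s)) hr.
by rewrite (wv (ltnW hs)) -addnS (wv hs) prefix_catr // eqxx.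
Qed.

Lemma vpref_u s : s <= p -> prefix (v s) u.
Proof.
move=> hs; have hle : i + s <= i + p by rewrite leq_add2l.
have := tw_pref hle; rewrite ip => /(_ hjr).
by rewrite -ip (wv hs) (wv (leqnn p)) prefix_catr // eqxx.
Qed.

Lemma pump_reach (X : nfa Sigma) : nfa_reach X (w i) = nfa_reach X (w j) ->
  forall t y, nfa_reach X (w i ++ (pw u t ++ y)) = nfa_reach X (w i ++ y).
Proof.
move=> eqX.
have hu : foldl (@nfa_step Sigma X) (nfa_reach X (w i)) u = nfa_reach X (w i).
  by rewrite -reach_cat -(wv (leqnn p)) ip eqX.
elim=> [|t IH] y //=.
by rewrite -catA IH !reach_cat foldl_cat hu.
Qed.

Fixpoint pos k : nat * nat :=
  if k is k'.+1 then let '(t, s) := pos k' in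
    if s.+1 == p then (t.+1, 0) else (t, s.+1)
  else (0, 0).

Lemma pos_lt k : (pos k).2 < p.
Proof.
have p0 : 0 < p by rewrite /p; lia.
elim: k => [|k] //=; case: (pos k) => t s /= hs.
case: eqP => //= h; lia.
Qed.

Definition W t s := w i ++ (pw u t ++ v s).
Definition w' k := W (pos k).1 (pos k).2.

Lemma reach_W (X : nfa Sigma) : nfa_reach X (w i) = nfa_reach X (w j) ->
  forall t s, s <= p -> nfa_reach X (W t s) = nfa_reach X (w (i + s)).
Proof. by move=> eqX t s hs; rewrite /W pump_reach // wv. Qed.

Lemma reach_next (X : nfa Sigma) : nfa_reach X (w i) = nfa_reach X (w j) ->
  forall k, nfa_reach X (w' k.+1) = nfa_reach X (w (i + (pos k).2).+1).
Proof.
move=> eqX k; have := pos_lt k; rewrite /w' /=; case: (pos k) => t s /= hs.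
case: eqP => h /=.
  by rewrite reach_W // addn0 eqX -addnS h ip.
by rewrite reach_W ?addnS //; lia.
Qed.

Lemma pref_next k : prefix (w' k) (w' k.+1).
Proof.
have := pos_lt k; rewrite /w' /W /=; case: (pos k) => t s /= hs.
case: eqP => h /=.
  rewrite /v addn0 drop_size cats0 prefix_catr // eqxx /= prefix_catr // eqxx /=.
  exact: (vpref_u (ltnW hs)).
by rewrite prefix_catr // eqxx /= prefix_catr // eqxx /=; apply: vpref; lia.
Qed.

Lemma w'_inf : inf_tower (nfa_lang A) (nfa_lang B) w'.
Proof.
case: tw => _ [_ hs].
split.
  rewrite /w' /= (lang_reach (reach_W eqA 0 (leq0n p))).
  rewrite (lang_reach (reach_W eqB 0 (leq0n p))) addn0.
  by apply: tw_mem; lia.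
move=> k; have hk := pos_lt k.
have hr : (i + (pos k).2).+1 < r by rewrite /p in hk; lia.
have [_ h1 h2] := hs _ hr.
split; first exact: pref_next.
  rewrite /w' (lang_reach (reach_W eqA _ (ltnW hk))).
  by rewrite -/(w' k.+1) (lang_reach (reach_next eqB k)).
rewrite /w' (lang_reach (reach_W eqB _ (ltnW hk))).
by rewrite -/(w' k.+1) (lang_reach (reach_next eqA k)).
Qed.

End Pump.

Lemma pairs_diff i j : i < j -> j < r ->
  (nfa_reach A (w i), nfa_reach B (w i)) <> (nfa_reach A (w j), nfa_reach B (w j)).
Proof.
move=> hij hjr [eA eB]; apply: noinf; exists (w' i j); exact: w'_inf.
Qed.


Lemma count_bound : r <= 2 ^ (#|nfa_state A| + #|nfa_state B| - 1).
Proof.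
have [_ [h0 hs]] := tw.
have small : (forall q, q \in nfa_final A = false) \/ (forall q, q \in nfa_final B = false) ->
    r <= 2 ^ (#|nfa_state A| + #|nfa_state B| - 1).
  move=> hF; suff hr1 : r <= 1 by apply: leq_trans hr1 _; rewrite expn_gt0.
  rewrite leqNgt; apply/negP => hr.
  have [_ hK hL] := hs 0 hr.
  have nA : ~ nfa_lang A (w 0) /\ ~ nfa_lang A (w 1) \/ ~ nfa_lang B (w 0) /\ ~ nfa_lang B (w 1).
    rewrite /nfa_lang; case: hF => hF; [left | right]; split;
    by move=> /existsP [q /andP [_]]; rewrite hF.
  by case: nA => [[n0 n1]|[n0 n1]]; case: h0 => h;
    [exact: n0 h | exact: n1 (hL h) | exact: n1 (hK h) | exact: n0 h].
case: (pickP (mem (nfa_final A))) => [qA hqA | hA0]; last by apply: small; left.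
case: (pickP (mem (nfa_final B))) => [qB hqB | hB0]; last by apply: small; right.
have {}hqA : qA \in nfa_final A by [].
have {}hqB : qB \in nfa_final B by [].
set TA := nfa_state A; set TB := nfa_state B.
pose a (S : {set TA}) := [exists q in S, q \in nfa_final A].
pose b (S : {set TB}) := [exists q in S, q \in nfa_final B].
pose G := [set pr : {set TA} * {set TB} | a pr.1 (+) b pr.2].
pose P (k : 'I_r) := (nfa_reach A (w k), nfa_reach B (w k)).
have Pinj : injective P.
  move=> k l hkl; apply: val_inj => /=.
  case: (ltngtP k l) => // hlt.
    by case: (pairs_diff hlt (ltn_ord l)).
  by case: (pairs_diff hlt (ltn_ord k)).
have PG : P @: 'I_r \subset G.
  apply/subsetP => _ /imsetP [k _ ->]; rewrite inE /=.
  case: (tw_mem (ltn_ord k)) => h.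
    have hb : b (nfa_reach B (w k)) = false.
      by apply/negbTE/negP => hb; exact: (disjKL h hb).
    by rewrite hb addbF.
  have ha : a (nfa_reach A (w k)) = false.
    by apply/negbTE/negP => ha; exact: (disjKL ha h).
  by rewrite ha.
have h1 : r <= #|G|.
  by rewrite -{1}(card_ord r) -(card_imset _ Pinj); exact: subset_leq_card.
pose g (pr : {set TA} * {set TB}) :=
  if qA \in pr.1 then (pr.1 :\ qA, pr.2)
  else if a pr.1 then (pr.1, qB |: pr.2) else pr.
pose gi (pr : {set TA} * {set TB}) :=
  if qB \in pr.2 then (if a pr.1 then (pr.1, pr.2 :\ qB) else pr)
  else (if b pr.2 then pr else (qA |: pr.1, pr.2)).
have aq (S : {set TA}) : qA \in S -> a S by move=> hS; apply/existsP; exists qA; rewrite hS hqA.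
have bq (S : {set TB}) : qB \in S -> b S by move=> hS; apply/existsP; exists qB; rewrite hS hqB.
have gK : {in G, cancel g gi}.
  move=> [S T]; rewrite inE /= => hx; rewrite /g /=.
  case hqS: (qA \in S).
    move: hx; rewrite (aq _ hqS) /= => /negbTE hbT.
    have hqT : (qB \in T) = false by apply/negP => /bq; rewrite hbT.
    by rewrite /gi /= hqT hbT setD1K.
  case haS: (a S).
    move: hx; rewrite haS /= => /negbTE hbT.
    rewrite /gi /= setU11 haS setU1K //.
    by apply/negP => /bq; rewrite hbT.
  move: hx; rewrite haS /= => hbT.
  by rewrite /gi /= haS hbT; case: ifP.
pose tgt := setX (powerset [set~ qA]) [set: {set TB}].
have gT : g @: G \subset tgt.
  apply/subsetP => _ /imsetP [[S T] _ ->]; rewrite /g /=.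
  case: ifP => hqS; last case: ifP => _.
  - rewrite !inE /=; apply/andP; split => //; apply/subsetP => x; rewrite !inE.
    by case/andP.
  - rewrite !inE /=; apply/andP; split => //; apply/subsetP => x; rewrite !inE.
    by apply: contraTneq => ->; rewrite hqS.
  - rewrite !inE /=; apply/andP; split => //; apply/subsetP => x; rewrite !inE.
    by apply: contraTneq => ->; rewrite hqS.
have h2 : #|G| <= #|tgt|.
  by rewrite -(card_in_imset (can_in_inj gK)); exact: subset_leq_card.
have cA : 0 < #|TA| by apply/card_gt0P; exists qA.
rewrite cardsX card_powerset cardsC1 -powersetT card_powerset cardsT -expnD in h2.
have : #|TA|.-1 + #|TB| = #|TA| + #|TB| - 1 by lia.
move=> e; rewrite -e; exact: leq_trans h1 h2.
Qed.

End Gen.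

Lemma sum_pow (N j : nat) : \sum_(i < N | i < j) 2 ^ i + 1 = 2 ^ (minn N j).
Proof.
elim: N => [|N IH]; first by rewrite big_ord0 min0n.
rewrite big_mkcond big_ord_recr /= -big_mkcond /=.
case: (ltnP N j) => hN.
  rewrite addnAC IH; have -> : minn N j = N by lia.
  have -> : minn N.+1 j = N.+1 by lia.
  by rewrite expnS mul2n addnn.
by rewrite addn0 IH; congr (2 ^ _); lia.
Qed.

Section Part2.
Variable k : nat.
Local Notation n := k.+1.

Definition Bn : nfa 'I_n := @NFA 'I_n 'I_n setT [set ord0]
  (fun q a => if q == a then [set i : 'I_n | i < a] else [set q]).
Definition An : nfa 'I_n := @NFA 'I_n bool [set false] [set true]
  (fun _ a => [set a == ord0]).

Definition c (S : {set 'I_n}) := \sum_(i in S) 2 ^ (val i).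

Lemma step_notin (S : {set 'I_n}) j : j \notin S -> nfa_step (A:=Bn) S j = S.
Proof.
move=> hj; apply/setP => x; apply/bigcupP/idP => [[q hq] | hx].
  by rewrite /= ifN ?inE; [move=> /eqP -> | apply: contraNneq hj => <-].
exists x => //=; rewrite ifN ?inE //; by apply: contraNneq hj => <-.
Qed.

Lemma step_in (S : {set 'I_n}) j : j \in S ->
  nfa_step (A:=Bn) S j = (S :\ j) :|: [set i : 'I_n | i < j].
Proof.
move=> hj; apply/setP => x; apply/bigcupP/idP => [[q hq] | hx].
  rewrite /=; case: eqP => [eqj | hqj]; first subst q; rewrite !inE.
    by move=> h; apply/orP; right.
  by move=> /eqP ->; rewrite hq andbT; apply/orP; left; apply/eqP.
move: hx; rewrite !inE => /orP [/andP [hxj hx] | hx].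
  by exists x => //=; rewrite ifN // inE.
by exists j => //=; rewrite eqxx inE.
Qed.

Lemma c_union (X Y : {set 'I_n}) : c (X :|: Y) + c (X :&: Y) = c X + c Y.
Proof.
rewrite /c !(big_mkcond (fun i => i \in _)) -!big_split /=.
apply: eq_bigr => i _; rewrite !inE.
by case: (i \in X); case: (i \in Y); rewrite /= ?addn0 ?add0n.
Qed.

Lemma c_D1 (S : {set 'I_n}) j : j \in S -> c S = c (S :\ j) + 2 ^ j.
Proof.
move=> hj; rewrite /c (bigD1 j) //= addnC; congr (_ + _).
by apply: eq_bigl => i; rewrite !inE andbC.
Qed.

Lemma c_P (j : 'I_n) : c [set i : 'I_n | i < j] + 1 = 2 ^ j.
Proof.
have -> : 2 ^ j = 2 ^ minn n j by congr (_ ^ _); have := ltn_ord j; lia.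
rewrite /c -(sum_pow n j); congr (_ + _).
by apply: eq_bigl => i; rewrite inE.
Qed.

Lemma step_lt (S : {set 'I_n}) j : j \in S -> c (nfa_step (A:=Bn) S j) < c S.
Proof.
move=> hj; rewrite step_in // (c_D1 hj).
have := c_union (S :\ j) [set i : 'I_n | i < j]; have := c_P j; lia.
Qed.

Lemma step_min (S : {set 'I_n}) j : j \in S -> (forall i, i \in S -> j <= i) ->
  c (nfa_step (A:=Bn) S j) + 1 = c S.
Proof.
move=> hj hmin; rewrite step_in // (c_D1 hj).
have := c_union (S :\ j) [set i : 'I_n | i < j]; have := c_P j.
have -> : (S :\ j) :&: [set i : 'I_n | i < j] = set0.
  apply/setP => x; rewrite !inE; apply/negP => /andP [/andP [_ hx] hxj].
  by have := hmin x hx; lia.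
rewrite /c big_set0; lia.
Qed.

Lemma foldl_dec (z : seq 'I_n) (S : {set 'I_n}) :
  foldl (@nfa_step _ Bn) S z = S \/ c (foldl (@nfa_step _ Bn) S z) < c S.
Proof.
elim: z S => [|a z IH] S /=; first by left.
have hS : nfa_step (A:=Bn) S a = S \/ c (nfa_step (A:=Bn) S a) < c S.
  case: (boolP (a \in S)) => h; [right; exact: step_lt | left; exact: step_notin].
case: (IH (nfa_step (A:=Bn) S a)) => h1; case: hS => h2.
- by left; rewrite h1 h2.
- by right; rewrite h1.
- by right; rewrite -{2}h2.
- by right; apply: ltn_trans h1 h2.
Qed.

Lemma ord0_step0 (S : {set 'I_n}) : ord0 \notin nfa_step (A:=Bn) S ord0.
Proof.
case: (boolP (ord0 \in S)) => h; last by rewrite step_notin.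
by rewrite step_in // !inE eqxx.
Qed.

Lemma langB x : nfa_lang Bn x <-> ord0 \in nfa_reach Bn x.
Proof.
rewrite /nfa_lang; split.
  by move=> /existsP [q /andP [hq]]; rewrite inE => /eqP <-.
by move=> h; apply/existsP; exists ord0; rewrite h inE eqxx.
Qed.

Lemma stepA (R : {set bool}) a : R != set0 -> nfa_step (A:=An) R a = [set a == ord0].
Proof.
case/set0Pn => q hq; apply/setP => x; apply/bigcupP/idP => [[q' _] // | hx].
by exists q.
Qed.

Lemma reachA_ne x : nfa_reach An x != set0.
Proof.
elim/last_ind: x => [|y a IH]; first by apply/set0Pn; exists false; rewrite inE.
rewrite /nfa_reach foldl_rcons -/(nfa_reach An y) stepA //.
by apply/set0Pn; exists (a == ord0); rewrite inE.
Qed.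

Lemma langA x : nfa_lang An x <-> exists y, x = rcons y ord0.
Proof.
rewrite /nfa_lang; split.
  case/lastP: x => [|y a].
    by move=> /existsP [q /andP []]; rewrite !inE => /eqP -> /eqP.
  rewrite /nfa_reach foldl_rcons -/(nfa_reach An y) stepA ?reachA_ne //.
  move=> /existsP [q /andP []]; rewrite !inE => /eqP -> /eqP.
  by case: eqP => // -> _; exists y.
move=> [y ->]; apply/existsP; exists true.
by rewrite /nfa_reach foldl_rcons -/(nfa_reach An y) stepA ?reachA_ne // !inE eqxx.
Qed.

Lemma langA_not0 x : nfa_lang An x -> ord0 \notin nfa_reach Bn x.
Proof.
by move=> /langA [y ->]; rewrite /nfa_reach foldl_rcons ord0_step0.
Qed.

Lemma no_inf : ~ (exists w, inf_tower (nfa_lang An) (nfa_lang Bn) w).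
Proof.
move=> [w [h0 hs]].
have mem i : nfa_lang An (w i) \/ nfa_lang Bn (w i).
  elim: i => // i IH; have [_ hK hL] := hs i.
  by case: IH => h; [right; exact: hK | left; exact: hL].
have dec i : c (nfa_reach Bn (w i.+1)) < c (nfa_reach Bn (w i)).
  have [hp hK hL] := hs i.
  have ne : nfa_reach Bn (w i.+1) <> nfa_reach Bn (w i).
    case: (mem i) => h.
      have := hK h => /langB h1; have := langA_not0 h.
      by move=> h2 e; move: h1; rewrite e (negbTE h2).
    have := hL h => /langA_not0 h1; move: h => /langB h2 e.
    by move: h1; rewrite e h2.
  move/prefixP: hp => [z ez]; move: ne; rewrite ez /nfa_reach foldl_cat.
  by case: (foldl_dec z (foldl (@nfa_step _ Bn) (nfa_init Bn) (w i))).
have bnd i : c (nfa_reach Bn (w i)) + i <= c (nfa_reach Bn (w 0)).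
  elim: i => [|i IH]; first by rewrite addn0.
  by have := dec i; lia.
by have := bnd (c (nfa_reach Bn (w 0))).+1; lia.
Qed.

Definition low (S : {set 'I_n}) : 'I_n :=
  odflt ord0 [pick j in S | [forall i in S, j <= i]].

Lemma lowP (S : {set 'I_n}) : S != set0 -> low S \in S /\ forall i, i \in S -> low S <= i.
Proof.
case/set0Pn => x hx; rewrite /low; case: pickP => [j /andP [hj /forallP hm] | none] /=.
  by split => // i hi; have := hm i; rewrite hi.
case: (arg_minnP (fun i : 'I_n => val i) hx) => j hj hm.
have hj' : j \in S := hj.
exfalso; move: (none j) => /=; rewrite hj' /= => /negbT/negP; apply.
by apply/forallP => i; apply/implyP => hi; exact: hm.
Qed.

Fixpoint ws t : seq 'I_n :=
  if t is t'.+1 then rcons (ws t') (low (nfa_reach Bn (ws t'))) else [::].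

Lemma reach_ws t : nfa_reach Bn (ws t.+1) =
  nfa_step (A:=Bn) (nfa_reach Bn (ws t)) (low (nfa_reach Bn (ws t))).
Proof. by rewrite /= /nfa_reach foldl_rcons. Qed.

Lemma c_ws t : t < 2 ^ n -> c (nfa_reach Bn (ws t)) + t + 1 = 2 ^ n.
Proof.
elim: t => [|t IH] ht.
  rewrite addn0 /= /nfa_reach /=.
  have -> : 2 ^ n = 2 ^ minn n n by rewrite minnn.
  rewrite -(sum_pow n n); congr (_ + _).
  by apply: eq_bigl => i; rewrite inE ltn_ord.
have := IH (ltnW ht); set S := nfa_reach Bn (ws t) => e.
have ne : S != set0.
  by apply/eqP => hS; move: e; rewrite hS /c big_set0; lia.
have [hl hm] := lowP ne.
rewrite reach_ws -/S; have := step_min hl hm; lia.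
Qed.

Lemma ws_tower : tower (nfa_lang An) (nfa_lang Bn) ws (2 ^ n).
Proof.
split; first by rewrite expn_gt0.
split; first by right; apply/langB; rewrite /= inE.
move=> i hi.
have := c_ws (ltnW hi); set S := nfa_reach Bn (ws i) => e.
have ne : S != set0.
  by apply/eqP => hS; move: e; rewrite hS /c big_set0; lia.
have [hl hm] := lowP ne.
split.
- exact: prefix_rcons.
- move=> /langA_not0; rewrite -/S => h0; apply/langB; rewrite reach_ws -/S.
  have hne : low S != ord0 by apply: contraNneq h0 => <-.
  rewrite step_in // !inE; apply/orP; right.
  by move: hne; rewrite -(inj_eq val_inj) /= lt0n.
- move=> /langB; rewrite -/S => h0; apply/langA; exists (ws i) => /=.
  congr rcons; rewrite -/S; apply: ord_inj; have := hm _ h0; rewrite /=; lia.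
Qed.

End Part2.

Lemma part2 (N : nat) : exists m n : nat, N <= m + n /\
     exists (Sigma : finType) (A B : nfa Sigma),
       [/\ nfa_size A = m, nfa_size B = n,
           ~ (exists w, inf_tower (nfa_lang A) (nfa_lang B) w) &
           exists (w : nat -> seq Sigma) (r : nat),
             tower (nfa_lang A) (nfa_lang B) w r /\ 2 ^ (m + n - 2) <= r].
Proof.
exists 2, N.+1; split; first lia.
exists 'I_N.+1, (An N), (Bn N); split.
- by rewrite /nfa_size /= card_bool.
- by rewrite /nfa_size /= card_ord.
- exact: no_inf.
- exists (ws N), (2 ^ N.+1); split; first exact: ws_tower.
  by have -> : 2 + N.+1 - 2 = N.+1 by lia.
Qed.

Theorem corollary16 :
  (forall (Sigma : finType) (m n : nat) (A B : nfa Sigma),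
      nfa_size A <= m -> nfa_size B <= n ->
      ~ (exists w, inf_tower (nfa_lang A) (nfa_lang B) w) ->
      forall (w : nat -> seq Sigma) (r : nat),
        tower (nfa_lang A) (nfa_lang B) w r -> r <= 2 ^ (m + n - 1))
  /\
  (forall N : nat, exists m n : nat, N <= m + n /\
     exists (Sigma : finType) (A B : nfa Sigma),
       [/\ nfa_size A = m, nfa_size B = n,
           ~ (exists w, inf_tower (nfa_lang A) (nfa_lang B) w) &
           exists (w : nat -> seq Sigma) (r : nat),
             tower (nfa_lang A) (nfa_lang B) w r /\ 2 ^ (m + n - 2) <= r]).
Proof.
split; last exact: part2.
move=> Sigma m n A B hA hB noinf w r tw.
apply: leq_trans (count_bound noinf tw) _.
apply: leq_pexp2l => //; rewrite /nfa_size in hA hB; lia.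
Qed.
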